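(* Let $A$ be the filtered boundary matrix of a Morse decomposition with respect to an admissible enumeration $\sigma_1,\dots,\sigma_n$, let $A_{out}$ be the matrix obtained after the reduction phase of ConMat, and let $\bar A$ be any complete column reduction of $A_{out}$. Then for every $j$, column $j$ is homogeneous in $A_{out}$ if and only if column $j$ is homogeneous in $\bar A$.
   Context: $K$ is a finite simplicial complex ($\tau\le\sigma$: $\tau$ is a face of $\sigma$; $\mathrm{cl}(\sigma)=\{\tau:\tau\le\sigma\}$). A multivector field $\mathcal V$ on $K$ is a partition of $K$ into convex sets $V$ (if $\sigma,\tau\in V$ and $\sigma\le\mu\le\tau$ then $\mu\in V$); $[\sigma]_{\mathcal V}$ is the part containing $\sigma$, $F_{\mathcal V}(\sigma)=[\sigma]_{\mathcal V}\cup\mathrm{cl}(\sigma)$, and a path is a sequence $\sigma_1,\dots,\sigma_r$ with $\sigma_k\in F_{\mathcal V}(\sigma_{k-1})$. A Morse decomposition indexed by a finite poset $(P,\le_P)$ is a partition $K=\bigsqcup_{p\in P}M_p$ such that every path from $M_p$ to $M_q$ has $q\le_P p$; $[\sigma]_P$ is the $p$ with $\sigma\in M_p$. An admissible enumeration is $\sigma_1,\dots,\sigma_n$ of all simplices of $K$ such that (a) for some linear extension $\le_{lin}$ of $\le_P$, $i\le j\Rightarrow[\sigma_i]_P\le_{lin}[\sigma_j]_P$; (b) if $\sigma_i$ is a proper face of $\sigma_j$ then $i<j$. The filtered boundary matrix $A$ is the $n\times n$ $\mathbb Z_2$-matrix with $A[i,j]=1$ iff $\sigma_i$ is a codimension-one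 face of $\sigma_j$; row/column $i$ represents $\sigma_i$ (in all matrices derived from $A$ by column additions). For a nonzero column $j$ of a matrix $B$, $\mathrm{low}_B(j)$ is the largest $i$ with $B[i,j]=1$. Column $j$ is homogeneous in $B$ if it is nonzero and $\sigma_j$, $\sigma_{\mathrm{low}_B(j)}$ lie in the same Morse set. ConMat reduction phase on $A$ (in place): for $j=1,\dots,n$: for $i=\mathrm{low}_A(j)$ down to $1$: if $A[i,j]=1$ and some column $s<j$ of the current matrix is homogeneous with $\mathrm{low}_A(s)=i$, add column $s$ to column $j$ (mod 2). $A_{out}$ is the result. A complete column reduction of a matrix $B$ is a matrix $\bar B$ obtained from $B$ by a finite sequence of additions of a column $s$ to a column $j$ with $s<j$ (no homogeneity restriction) such that distinct nonzero columns of $\bar B$ have distinct values of $\mathrm{low}$. *)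

(* Defs.v *)
From HB Require Import structures.
From mathcomp Require Import all_boot all_order all_algebra.
Set Implicit Arguments. Unset Strict Implicit. Unset Printing Implicit Defensive.
Import Order.TTheory GRing.Theory.

Section Simplicial.
Variable V : finType.
Implicit Types (K : {set {set V}}) (s t : {set V}).

Definition simplicial_complex K : Prop :=
  forall s, s \in K -> s != set0 /\ (forall t, t != set0 -> t \subset s -> t \in K).

Definition closure K s : {set {set V}} := [set t in K | t \subset s].

Definition codim1 t s : bool := (t \subset s) && (#|s| == #|t|.+1).

Definition convex K (X : {set {set V}}) : Prop :=
  forall s t mu, s \in X -> t \in X -> mu \in K ->
    s \subset mu -> mu \subset t -> mu \in X.

Definition multivector_field K (mvf : {set {set {set V}}}) : Prop :=
  partition mvf K /\ forall X, X \in mvf -> convex K X.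

Definition Fmvf K (mvf : {set {set {set V}}}) s : {set {set V}} :=
  pblock mvf s :|: closure K s.

Definition path_rel K mvf : rel {set V} := fun a b => b \in Fmvf K mvf a.

Definition morse_decomposition d (P : finPOrderType d) K mvf
    (M : P -> {set {set V}}) : Prop :=
  [/\ (forall p q, p != q -> [disjoint M p & M q]),
      (\bigcup_(p : P) M p) = K &
      (forall p q x (s : seq {set V}), x \in M p -> path (path_rel K mvf) x s ->
         last x s \in M q -> (q <= p)%O)].

Definition linear_extension d (P : finPOrderType d) (lin : rel P) : Prop :=
  [/\ reflexive lin, antisymmetric lin, transitive lin, total lin &
      forall p q : P, (p <= q)%O -> lin p q].

Definition admissible_enumeration d (P : finPOrderType d) K
    (M : P -> {set {set V}}) n (sigma : 'I_n -> {set V}) : Prop :=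
  [/\ injective sigma,
      (forall i, sigma i \in K),
      (forall s, s \in K -> exists i, sigma i = s),
      (exists lin : rel P, linear_extension lin /\
         forall (i j : 'I_n) p q, i <= j -> sigma i \in M p -> sigma j \in M q -> lin p q) &
      (forall i j : 'I_n, sigma i \proper sigma j -> i < j)].

Definition same_morse d (P : finPOrderType d) (M : P -> {set {set V}}) n
    (sigma : 'I_n -> {set V}) (i j : 'I_n) : bool :=
  [exists p, (sigma i \in M p) && (sigma j \in M p)].

Definition boundary_matrix n (sigma : 'I_n -> {set V}) : 'M['F_2]_n :=
  \matrix_(i, j) (if codim1 (sigma i) (sigma j) then 1%R else 0%R).

End Simplicial.

Section Reduction.
Variable n : nat.
Implicit Types (B : 'M['F_2]_n).

Definition low B (j : 'I_n) : option 'I_n :=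
  [pick i | (B i j != 0%R) && [forall k, (B k j != 0%R) ==> (k <= i)]].

Definition homogeneous (same : 'I_n -> 'I_n -> bool) B (j : 'I_n) : bool :=
  if low B j is Some i then same j i else false.

Definition addcol B (s j : 'I_n) : 'M['F_2]_n :=
  \matrix_(a, b) (if b == j then (B a j + B a s)%R else B a b).

Definition conmat_step same B (j i : 'I_n) : 'M['F_2]_n :=
  if B i j != 0%R then
    if [pick s : 'I_n | (s < j) && homogeneous same B s && (low B s == Some i)]
       is Some s then addcol B s j else B
  else B.

Definition conmat_col same B (j : 'I_n) : 'M['F_2]_n :=
  if low B j is Some l then
    foldl (fun C i => conmat_step same C j i) B [seq i : 'I_n <- rev (enum 'I_n) | i <= l]
  else B.

Definition conmat_reduce same B : 'M['F_2]_n :=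
  foldl (conmat_col same) B (enum 'I_n).

Definition complete_column_reduction B (Abar : 'M['F_2]_n) : Prop :=
  (exists ops : seq ('I_n * 'I_n),
     all (fun p : 'I_n * 'I_n => p.1 < p.2) ops /\
     Abar = foldl (fun C (p : 'I_n * 'I_n) => addcol C p.1 p.2) B ops) /\
  (forall j1 j2 : 'I_n, j1 != j2 -> low Abar j1 != None -> low Abar j1 != low Abar j2).

End Reduction.

(* Main.v *)
Require Import Defs.
From HB Require Import structures.
From mathcomp Require Import all_boot all_order all_algebra.
Set Implicit Arguments. Unset Strict Implicit. Unset Printing Implicit Defensive.
Import GRing.Theory.

Lemma F2_addxx (a : 'F_2) : (a + a = 0)%R.
Proof. apply/val_inj; case: a => [[|[|k]]] //= ?. Qed.
Lemma F2_add11 (a b : 'F_2) : (a != 0)%R -> (b != 0)%R -> (a + b = 0)%R.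
Proof. case: a => [[|[|k]]] //= Ha; case: b => [[|[|k']]] //= Hb. by move=> *; apply/val_inj. Qed.

Lemma lowP n (B : 'M['F_2]_n) j i :
  low B j = Some i -> (B i j != 0)%R /\ forall k, (B k j != 0)%R -> k <= i.
Proof.
rewrite /low; case: pickP => // x /andP [Hx /forallP Hf] [<-]; split => // k Hk.
by move: (Hf k); rewrite Hk.
Qed.

Lemma lowS n (B : 'M['F_2]_n) j i :
  (B i j != 0)%R -> (forall k, (B k j != 0)%R -> k <= i) -> low B j = Some i.
Proof.
move=> Hi Hk; rewrite /low; case: pickP => [x /andP [Hx /forallP Hf]|H].
  congr Some; apply/val_inj/eqP; rewrite eqn_leq Hk //=.
  by move: (Hf i); rewrite Hi.
move: (H i); rewrite Hi /=; move/negP; case; apply/forallP => k; apply/implyP; exact: Hk.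
Qed.

Lemma lowN n (B : 'M['F_2]_n) j :
  low B j = None -> forall i, B i j = 0%R.
Proof.
move=> Hn i; apply/eqP; apply/negPn/negP => Hi.
case: (@arg_maxnP _ i (fun k => B k j != 0)%R (fun k : 'I_n => val k) Hi) => m Hm Hmax.
by rewrite (lowS Hm (fun k Hk => Hmax k Hk)) in Hn.
Qed.

Lemma lowE n (B : 'M['F_2]_n) j i : low B j = Some i -> (B i j != 0)%R.
Proof. by case/lowP. Qed.

Lemma low_ext n (B C : 'M['F_2]_n) j j' :
  (forall i, B i j = C i j') -> low B j = low C j'.
Proof.
move=> H; rewrite /low; apply: eq_pick => i /=; rewrite H; congr andb.
by apply: eq_forallb => k; rewrite H.
Qed.

Lemma hom_ext n same (B C : 'M['F_2]_n) j :
  (forall i, B i j = C i j) -> homogeneous same B j = homogeneous same C j.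
Proof. by move=> H; rewrite /homogeneous (low_ext H). Qed.

Definition ut n (B : 'M['F_2]_n) := forall i j, (B i j != 0)%R -> i < j.

Lemma ut_addcol n (B : 'M['F_2]_n) (s j : 'I_n) : ut B -> s < j -> ut (addcol B s j).
Proof.
move=> H sj a b; rewrite mxE; case: (eqVneq b j) => [->|bj]; last exact: H.
have [/eqP Ha|Ha] := boolP (B a j == 0%R); first by rewrite Ha add0r => /H /ltn_trans; apply.
by move=> _; apply: H.
Qed.

Lemma step_cases n same (C : 'M['F_2]_n) j i :
  conmat_step same C j i = C \/
  exists s : 'I_n, [/\ s < j, low C s = Some i, (C i j != 0)%R & conmat_step same C j i = addcol C s j].
Proof.
rewrite /conmat_step; case: ifP => Hij; last by left.
case: pickP => [s /andP [/andP [sj _] /eqP ls]|_]; last by left.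
by right; exists s.
Qed.

Lemma step_other n same (C : 'M['F_2]_n) j i a b : b != j -> conmat_step same C j i a b = C a b.
Proof.
move=> bj; case: (step_cases same C j i) => [->//|[s [_ _ _ ->]]].
by rewrite mxE (negbTE bj).
Qed.

Lemma ut_step n same (C : 'M['F_2]_n) j i : ut C -> ut (conmat_step same C j i).
Proof.
move=> H; case: (step_cases same C j i) => [->//|[s [sj _ _ ->]]]; exact: ut_addcol.
Qed.

Lemma foldl_ind (T S : Type) (f : T -> S -> T) (I : T -> Prop) L x :
  I x -> (forall y a, I y -> I (f y a)) -> I (foldl f x L).
Proof. by elim: L x => //= a L IH x Hx Hf; apply: IH => //; apply: Hf. Qed.

Lemma ut_col n same (C : 'M['F_2]_n) j : ut C -> ut (conmat_col same C j).
Proof.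
rewrite /conmat_col; case: (low C j) => // l H.
by apply: foldl_ind => // y a; apply: ut_step.
Qed.

Lemma col_other n same (C : 'M['F_2]_n) j a b : b != j -> conmat_col same C j a b = C a b.
Proof.
move=> bj; rewrite /conmat_col; case: (low C j) => // l.
apply: (foldl_ind (I := fun D : 'M['F_2]_n => D a b = C a b)) => // y c <-.
exact: step_other.
Qed.

Lemma ut_reduce n same (C : 'M['F_2]_n) : ut C -> ut (conmat_reduce same C).
Proof. by move=> H; apply: foldl_ind => // y a; apply: ut_col. Qed.

Definition noH n (same : rel 'I_n) (B : 'M['F_2]_n) (j i : 'I_n) : bool :=
  ~~ [exists s : 'I_n, (s < j) && homogeneous same B s && (low B s == Some i)].

Lemma noH_ext n (same : rel 'I_n) (B C : 'M['F_2]_n) (j i : 'I_n) :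
  (forall s : 'I_n, s < j -> forall a, B a s = C a s) -> noH same B j i = noH same C j i.
Proof.
move=> H; rewrite /noH; congr negb; apply: eq_existsb => s.
case sj: (s < j) => //=; rewrite (hom_ext same (H s sj)) (low_ext (H s sj)) //.
Qed.

Lemma lt_neq n (s j : 'I_n) : s < j -> s != j.
Proof. by move=> h; apply/eqP => e; rewrite e ltnn in h. Qed.

Lemma step_cases2 n same (C : 'M['F_2]_n) j i :
  (conmat_step same C j i = C /\ ((C i j == 0%R) || noH same C j i)) \/
  exists s : 'I_n, [/\ s < j, low C s = Some i, (C i j != 0)%R & conmat_step same C j i = addcol C s j].
Proof.
rewrite /conmat_step; case: ifP => Hij; last by left; split => //; rewrite (negbFE Hij).
case: pickP => [s /andP [/andP [sj _] /eqP ls]|Hn]; last first.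
  left; split => //; apply/orP; right; apply/existsP => [[s Hs]].
  by move: (Hn s); rewrite Hs.
by right; exists s.
Qed.

Lemma loop_inv n same (B : 'M['F_2]_n) (j : 'I_n) (L : seq 'I_n) (C : 'M['F_2]_n) :
  (forall a b, b != j -> C a b = B a b) ->
  (forall x, x \in L -> forall y : 'I_n, y < x -> y \in L) ->
  sorted (fun a b : 'I_n => b < a) L ->
  (forall i', (C i' j != 0)%R -> (i' \in L) || noH same B j i') ->
  forall i', (foldl (fun C i => conmat_step same C j i) C L i' j != 0)%R -> noH same B j i'.
Proof.
elim: L C => [|i L IH] C HC Hdown Hsort Hinv /=; first by move=> i' /Hinv.
have Htr : transitive (fun a b : 'I_n => b < a) by move=> a b c /= H1 H2; exact: ltn_trans H2 H1.
have Hlt : forall x, x \in L -> x < i.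
  by move=> x xL; move: (order_path_min Htr Hsort) => /allP /(_ x xL).
have Hdi : forall y : 'I_n, y < i -> y \in L.
  move=> y yi; move: (Hdown i (mem_head _ _) y yi); rewrite inE => /orP [/eqP yi'|//].
  by rewrite yi' ltnn in yi.
have HnoH : forall i0, noH same C j i0 = noH same B j i0.
  move=> i0; apply: noH_ext => s sj a; apply: HC; exact: lt_neq.
apply: IH.
- by move=> a b bj; rewrite step_other // HC.
- move=> x xL y yx; apply: Hdi; exact: ltn_trans yx (Hlt x xL).
- exact: path_sorted Hsort.
move=> i' Hi'.
case: (step_cases2 same C j i) => [[Heq Hor]|[s [sj ls Cij Heq]]]; rewrite Heq in Hi'.
  move: (Hinv i' Hi'); rewrite inE; case: (eqVneq i' i) => [ei|ni] //=.
  subst i'; move: Hor; rewrite (negbTE Hi') /= HnoH => ->; by rewrite orbT.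
move: Hi'; rewrite mxE eqxx; case: (ltngtP i' i) => [lt|gt|eq].
- by rewrite Hdi.
- have -> : C i' s = 0%R.
    apply/eqP; apply/negPn/negP => H; move: (proj2 (lowP ls) i' H).
    by rewrite leqNgt gt.
  rewrite addr0 => /Hinv; rewrite inE; case: (eqVneq i' i) => [ei|ni] //=.
  by rewrite ei ltnn in gt.
- have ei : i' = i by apply: val_inj.
  by subst i'; rewrite F2_add11 ?eqxx // lowE.
Qed.

Lemma enum_sorted n : sorted (fun a b : 'I_n => a < b) (enum 'I_n).
Proof. by have := iota_ltn_sorted 0 n; rewrite -val_enum_ord sorted_map. Qed.

Lemma col_good n same (B : 'M['F_2]_n) j i' :
  (conmat_col same B j i' j != 0)%R -> noH same B j i'.
Proof.
rewrite /conmat_col; case E: (low B j) => [l|]; last by rewrite (lowN E) eqxx.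
apply: loop_inv => //.
- move=> x; rewrite !mem_filter mem_rev mem_enum andbT => xl y yx.
  by rewrite mem_filter mem_rev mem_enum andbT (leq_trans (ltnW yx) xl).
- apply: sorted_filter; first by move=> a b c /= H1 H2; exact: ltn_trans H2 H1.
  rewrite rev_sorted; exact: enum_sorted.
- move=> k Hk; rewrite mem_filter mem_rev mem_enum andbT.
  by rewrite (proj2 (lowP E) k Hk).
Qed.

Definition good n same (C : 'M['F_2]_n) j := forall i, (C i j != 0)%R -> noH same C j i.

Lemma reduce_inv n same (L : seq 'I_n) (C : 'M['F_2]_n) :
  sorted (fun a b : 'I_n => a < b) L ->
  (forall j', j' \notin L -> good same C j' /\ forall x, x \in L -> j' < x) ->
  forall j, good same (foldl (conmat_col same) C L) j.
Proof.
elim: L C => [|j L IH] C Hs Hinv /=; first by move=> j; case: (Hinv j).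
have Htr : transitive (fun a b : 'I_n => a < b) by move=> a b c; apply: ltn_trans.
have Hlt : forall x, x \in L -> j < x.
  by move=> x xL; move: (order_path_min Htr Hs) => /allP /(_ x xL).
apply: IH; first exact: path_sorted Hs.
move=> j' Hj'; case: (eqVneq j' j) => [->|j'j].
  split => // i Hi; have := col_good Hi.
  by rewrite (@noH_ext _ same C (conmat_col same C j)) // => s sj a; rewrite col_other // lt_neq.
have Hj'L : j' \notin j :: L by rewrite inE negb_or j'j.
case: (Hinv j' Hj'L) => Hg Hx; split; last by move=> x xL; apply: Hx; rewrite inE xL orbT.
have jj : j' < j by apply: Hx; exact: mem_head.
move=> i; rewrite col_other // => /Hg.
rewrite (@noH_ext _ same C (conmat_col same C j)) // => s sj a.
by rewrite col_other // lt_neq // (ltn_trans sj jj).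
Qed.

Lemma reduce_good n same (B : 'M['F_2]_n) j : good same (conmat_reduce same B) j.
Proof.
apply: reduce_inv; first exact: enum_sorted.
by move=> j'; rewrite mem_enum.
Qed.

Definition mask n (same : rel 'I_n) (B : 'M['F_2]_n) : 'M['F_2]_n :=
  \matrix_(i, j) if same j i then B i j else 0%R.

Lemma low_some n (W : 'M['F_2]_n) i j : (W i j != 0)%R -> exists l, low W j = Some l.
Proof. by case E: (low W j) => [l|]; [exists l | rewrite (lowN E) eqxx]. Qed.


Lemma hom_mask n (same : rel 'I_n)
  (Hsym : forall a b, same a b = same b a)
  (Htr : forall a b c, same a b -> same b c -> same a c)
  (Hcont : forall a b c : 'I_n, same a c -> a <= b -> b <= c -> same a b)
  (B : 'M['F_2]_n) j :
  ut B -> homogeneous same B j = [exists i, mask same B i j != 0%R].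
Proof.
move=> Hut; rewrite /homogeneous; case E: (low B j) => [l|]; last first.
  by apply/esym/existsPn => i; rewrite mxE (lowN E); case: ifP.
apply/idP/existsP => [H|[i]]; first by exists l; rewrite mxE H lowE.
rewrite mxE; case: ifP => Hji Hi; last by rewrite eqxx in Hi.
have il := proj2 (lowP E) i Hi.
have lj := Hut _ _ (lowE E).
apply: (Htr j i l) => //.
by apply: (Hcont i l j) => //; [rewrite Hsym | exact: ltnW].
Qed.

Lemma low_mask n (same : rel 'I_n) (B : 'M['F_2]_n) j :
  homogeneous same B j -> low (mask same B) j = low B j.
Proof.
rewrite /homogeneous; case E: (low B j) => [l|] // Hjl.
apply: lowS; first by rewrite mxE Hjl lowE.
move=> k; rewrite mxE; case: ifP => _ Hk; last by rewrite eqxx in Hk.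
exact: (proj2 (lowP E)).
Qed.

Lemma mask_addcol n (same : rel 'I_n)
  (Hsym : forall a b, same a b = same b a)
  (Htr : forall a b c, same a b -> same b c -> same a c)
  (Hcont : forall a b c : 'I_n, same a c -> a <= b -> b <= c -> same a b)
  (B : 'M['F_2]_n) (s j : 'I_n) :
  ut B -> s < j ->
  mask same (addcol B s j) = if same s j then addcol (mask same B) s j else mask same B.
Proof.
move=> Hut sj; apply/matrixP => a b.
case: ifP => Hsj; rewrite !mxE; case: (eqVneq b j) => [->|bj] //; rewrite ?mxE.
- case: ifP => Hja; rewrite ?eqxx; last by rewrite (_ : same s a = false) ?addr0 //;
    apply/negP => Hsa; move: Hja; rewrite (Htr j s a) // Hsym.
  by rewrite (Htr s j a).
- case: ifP => Hja //.
  have -> : B a s = 0%R; last by rewrite addr0.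
  apply/eqP; apply/negPn/negP => Has.
  have as_ := Hut _ _ Has.
  have Haj : same a j by rewrite Hsym.
  have Has' := Hcont a s j Haj (ltnW as_) (ltnW sj).
  rewrite Hsym in Has'.
  by rewrite (Htr s a j Has' Haj) in Hsj.
Qed.

Definition Sk n (k : nat) (W : 'M['F_2]_n) : 'M['F_2]_n :=
  \matrix_(r, i) if r < k then W i r else 0%R.

Lemma S_addcol1 n k (C : 'M['F_2]_n) (s j : 'I_n) : s < j ->
  (Sk k (addcol C s j) <= Sk k C)%MS.
Proof.
move=> sj; apply/row_subP => r.
case: (eqVneq r j) => [->|rj]; last first.
  have -> : row r (Sk k (addcol C s j)) = row r (Sk k C).
    by apply/rowP => i; rewrite !mxE (negbTE rj).
  exact: row_sub.
case: (boolP (j < k)) => jk; last first.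
  have -> : row j (Sk k (addcol C s j)) = 0%R.
    by apply/rowP => i; rewrite !mxE (negbTE jk).
  exact: sub0mx.
have -> : row j (Sk k (addcol C s j)) = (row j (Sk k C) + row s (Sk k C))%R.
  by apply/rowP => i; rewrite !mxE eqxx jk (ltn_trans sj jk).
by apply: addmx_sub; apply: row_sub.
Qed.

Lemma S_addcol2 n k (C : 'M['F_2]_n) (s j : 'I_n) : s < j ->
  (Sk k C <= Sk k (addcol C s j))%MS.
Proof.
move=> sj; apply/row_subP => r.
case: (eqVneq r j) => [->|rj]; last first.
  have -> : row r (Sk k C) = row r (Sk k (addcol C s j)).
    by apply/rowP => i; rewrite !mxE (negbTE rj).
  exact: row_sub.
case: (boolP (j < k)) => jk; last first.
  have -> : row j (Sk k C) = 0%R.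
    by apply/rowP => i; rewrite !mxE (negbTE jk).
  exact: sub0mx.
have -> : row j (Sk k C) = (row j (Sk k (addcol C s j)) + row s (Sk k (addcol C s j)))%R.
  apply/rowP => i; rewrite !mxE eqxx jk (ltn_trans sj jk) (negbTE (lt_neq sj)).
  by rewrite -addrA F2_addxx addr0.
by apply: addmx_sub; apply: row_sub.
Qed.

Definition reduced n (W : 'M['F_2]_n) :=
  forall j1 j2 : 'I_n, j1 != j2 -> low W j1 != None -> low W j1 != low W j2.

Definition lown n (W : 'M['F_2]_n) (r : 'I_n) : nat := if low W r is Some l then val l else 0.

Lemma entry_zero n (W : 'M['F_2]_n) (r k : 'I_n) :
  (forall l, low W r = Some l -> l < k) -> W k r = 0%R.
Proof.
case E: (low W r) => [l|] H; last exact: (lowN E k).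
apply/eqP; apply/negPn/negP => Hk.
by move: (proj2 (lowP E) k Hk); rewrite leqNgt H.
Qed.

Lemma indep n (W : 'M['F_2]_n) (j : 'I_n) :
  reduced W -> ((\row_i W i j)%R <= Sk j W)%MS -> forall i, W i j = 0%R.
Proof.
move=> HR /submxP [D HD].
have He : forall i, W i j = (\sum_r (D ord0 r * (if (r < j)%N then W i r else 0)))%R.
  by move=> i; move/matrixP: HD => /(_ ord0 i); rewrite !mxE => ->; apply: eq_bigr => r _; rewrite mxE.
pose T := [pred r : 'I_n | (r < j) && (D ord0 r != 0)%R && (low W r != None)].
case: (pickP T) => [r0 Hr0|HT]; last first.
  move=> i; rewrite He big1 // => r _.
  case: ifP => rj; last by rewrite mulr0.
  move: (HT r); rewrite /T /= rj /=; case: (eqVneq (D ord0 r) 0%R) => [->|_] /=; first by rewrite mul0r.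
  by case E: (low W r) => // _; rewrite (lowN E) mulr0.
case: (@arg_maxnP _ r0 T (lown W) Hr0) => rs Hrs Hmax.
move: Hrs; rewrite /T /= => /andP [/andP [rsj Drs] lrs].
case E: (low W rs) lrs => [L|] // _.
have Hrest : forall k : 'I_n, L <= k -> forall r, r != rs ->
    (D ord0 r * (if (r < j)%N then W k r else 0) = 0)%R.
  move=> k Lk r rrs; case: ifP => rj; last by rewrite mulr0.
  case: (eqVneq (D ord0 r) 0%R) => [->|Dr]; first by rewrite mul0r.
  rewrite (@entry_zero _ W r k) ?mulr0 // => l El.
  have Tr : T r by rewrite /T /= rj Dr El.
  have lL : l <= L by move: (Hmax r Tr); rewrite /lown El E.
  rewrite (leq_trans _ Lk) // ltn_neqAle lL andbT.
  have := HR r rs rrs; rewrite El E => /(_ isT).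
  apply: contra => /eqP H; apply/eqP; congr Some; exact: val_inj.
have Hlow : low W j = Some L.
  apply: lowS.
    rewrite He (bigD1 rs) //= big1 ?addr0; last by move=> r rrs; apply: Hrest.
    by rewrite rsj mulf_neq0 // lowE.
  move=> k; rewrite leqNgt; apply: contraNN => Lk.
  rewrite He big1 ?eqxx // => r _.
  case: (eqVneq r rs) => [->|rrs]; last by apply: (Hrest k (ltnW Lk)).
  rewrite (@entry_zero _ W rs k); first by rewrite if_same mulr0.
  by move=> l; rewrite E => -[<-].
have := HR rs j (lt_neq rsj); rewrite E Hlow => /(_ isT).
by rewrite eqxx.
Qed.

Lemma transfer n (W W' : 'M['F_2]_n) (j : 'I_n) :
  reduced W' -> (Sk j.+1 W' <= Sk j.+1 W)%MS -> (Sk j W <= Sk j W')%MS ->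
  (forall i, W i j = 0%R) -> forall i, W' i j = 0%R.
Proof.
move=> HR H1 H2 H0; apply: indep => //.
have -> : (\row_i W' i j)%R = row j (Sk j.+1 W') by apply/rowP => i; rewrite !mxE ltnSn.
apply: submx_trans (row_sub _ _) _; apply: submx_trans H1 _.
have -> : Sk j.+1 W = Sk j W; last exact: H2.
apply/matrixP => r i; rewrite !mxE ltnS leq_eqVlt.
case: (eqVneq r j) => [->|rj] /=; first by rewrite eqxx ltnn H0.
case: eqP => //= e; case/eqP: rj; exact: val_inj.
Qed.

Lemma ops_inv n (same : rel 'I_n)
  (Hsym : forall a b, same a b = same b a)
  (Htr : forall a b c, same a b -> same b c -> same a c)
  (Hcont : forall a b c : 'I_n, same a c -> a <= b -> b <= c -> same a b)
  (C0 : 'M['F_2]_n) (ops : seq ('I_n * 'I_n)) (D : 'M['F_2]_n) :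
  ut D ->
  (forall k, (Sk k (mask same D) <= Sk k (mask same C0))%MS && (Sk k (mask same C0) <= Sk k (mask same D))%MS) ->
  all (fun p : 'I_n * 'I_n => p.1 < p.2) ops ->
  ut (foldl (fun C (p : 'I_n * 'I_n) => addcol C p.1 p.2) D ops) /\
  (forall k, (Sk k (mask same (foldl (fun C (p : 'I_n * 'I_n) => addcol C p.1 p.2) D ops)) <= Sk k (mask same C0))%MS
     && (Sk k (mask same C0) <= Sk k (mask same (foldl (fun C (p : 'I_n * 'I_n) => addcol C p.1 p.2) D ops)))%MS).
Proof.
elim: ops D => [|[s j] ops IH] D HD HS //= /andP [/= sj Hall].
apply: IH => //; first exact: ut_addcol.
move=> k; rewrite (mask_addcol Hsym Htr Hcont) //; case: ifP => _ //.
case/andP: (HS k) => H1 H2; apply/andP; split.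
  exact: submx_trans (S_addcol1 _ _ sj) H1.
exact: submx_trans H2 (S_addcol2 _ _ sj).
Qed.

Lemma good_contra n same (C : 'M['F_2]_n) (s j l : 'I_n) :
  good same C j -> s < j -> homogeneous same C s -> low C s = Some l -> low C j = Some l -> False.
Proof.
move=> Hg sj hs ls lj; move: (Hg l (lowE lj)); rewrite /noH => /negP; apply.
by apply/existsP; exists s; rewrite sj hs ls eqxx.
Qed.

Lemma main_abs n (same : rel 'I_n)
  (Hsym : forall a b, same a b = same b a)
  (Htr : forall a b c, same a b -> same b c -> same a c)
  (Hcont : forall a b c : 'I_n, same a c -> a <= b -> b <= c -> same a b)
  (B0 Abar : 'M['F_2]_n) :
  ut B0 -> complete_column_reduction (conmat_reduce same B0) Abar ->
  forall j, homogeneous same (conmat_reduce same B0) j = homogeneous same Abar j.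
Proof.
move=> Hut [[ops [Hall HA]] Hdist] j.
set A := conmat_reduce same B0.
have utA : ut A := @ut_reduce _ same _ Hut.
have [utAb HS] := @ops_inv n same Hsym Htr Hcont A ops A utA
   (fun k => introT andP (conj (submx_refl _) (submx_refl _))) Hall.
rewrite -HA in utAb HS.
have redA : reduced (mask same A).
  move=> j1 j2 j12; case E1: (low (mask same A) j1) => [l|] // _.
  have h1 : homogeneous same A j1.
    by rewrite (hom_mask Hsym Htr Hcont) //; apply/existsP; exists l; exact: lowE E1.
  apply/negP => /eqP E2.
  have h2 : homogeneous same A j2.
    by rewrite (hom_mask Hsym Htr Hcont) //; apply/existsP; exists l; rewrite (lowE (esym E2)).
  rewrite low_mask // in E1; rewrite low_mask // in E2.
  case: (ltngtP j1 j2) => [lt|gt|eq].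
  - exact: (good_contra (@reduce_good _ same B0 j2) lt h1 E1 (esym E2)).
  - exact: (good_contra (@reduce_good _ same B0 j1) gt h2 (esym E2) E1).
  - by move: j12; rewrite (val_inj eq) eqxx.
have redAb : reduced (mask same Abar).
  move=> j1 j2 j12; case E1: (low (mask same Abar) j1) => [l|] // _.
  have h1 : homogeneous same Abar j1.
    by rewrite (hom_mask Hsym Htr Hcont) //; apply/existsP; exists l; exact: lowE E1.
  apply/negP => /eqP E2.
  have h2 : homogeneous same Abar j2.
    by rewrite (hom_mask Hsym Htr Hcont) //; apply/existsP; exists l; rewrite (lowE (esym E2)).
  rewrite low_mask // in E1; rewrite low_mask // in E2.
  by move: (Hdist j1 j2 j12); rewrite E1 -E2 eqxx => /(_ isT).
rewrite (hom_mask Hsym Htr Hcont j utA) (hom_mask Hsym Htr Hcont j utAb).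
case E1: [exists i, mask same A i j != 0%R]; case E2: [exists i, mask same Abar i j != 0%R] => //.
- move/existsP: E1 => [i Hi]; exfalso; move/eqP: Hi; apply.
  apply: (@transfer _ (mask same Abar) (mask same A)) => //.
  + by case/andP: (HS j.+1).
  + by case/andP: (HS j).
  + by move=> k; apply/eqP; move/existsPn: E2 => /(_ k); rewrite negbK.
- move/existsP: E2 => [i Hi]; exfalso; move/eqP: Hi; apply.
  apply: (@transfer _ (mask same A) (mask same Abar)) => //.
  + by case/andP: (HS j.+1).
  + by case/andP: (HS j).
  + by move=> k; apply/eqP; move/existsPn: E1 => /(_ k); rewrite negbK.
Qed.

Theorem proposition3 (V : finType) (K : {set {set V}}) (mvf : {set {set {set V}}})
    (d : Order.disp_t) (P : finPOrderType d) (M : P -> {set {set V}})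
    (n : nat) (sigma : 'I_n -> {set V}) (Abar : 'M['F_2]_n) :
  simplicial_complex K ->
  multivector_field K mvf ->
  morse_decomposition K mvf M ->
  admissible_enumeration K M sigma ->
  complete_column_reduction
    (conmat_reduce (same_morse M sigma) (boundary_matrix sigma)) Abar ->
  forall j : 'I_n,
    homogeneous (same_morse M sigma)
      (conmat_reduce (same_morse M sigma) (boundary_matrix sigma)) j
    = homogeneous (same_morse M sigma) Abar j.
Proof.
move=> _ _ [Hdisj Hcov _] [_ inK _ [lin [[_ Hanti _ _ _] Hlin]] Hprop] HC.
have blk : forall i, exists p, sigma i \in M p.
  move=> i; have := inK i; rewrite -Hcov => /bigcupP [p _ Hp]; by exists p.
have uniqb : forall i p q, sigma i \in M p -> sigma i \in M q -> p = q.
  move=> i p q Hp Hq; case: (eqVneq p q) => // pq.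
  by rewrite (disjointFr (Hdisj p q pq) Hp) in Hq.
apply: main_abs => //.
- by move=> a b; rewrite /same_morse; apply: eq_existsb => p; rewrite andbC.
- move=> a b c /existsP [p /andP [Ha Hb]] /existsP [q /andP [Hb' Hc]].
  rewrite (uniqb _ _ _ Hb Hb') in Ha.
  by apply/existsP; exists q; rewrite Ha Hc.
- move=> a b c /existsP [p /andP [Ha Hc]] ab bc.
  have [q Hb] := blk b.
  have pq : p = q by apply: Hanti; rewrite (Hlin a b p q) ?(Hlin b c q p).
  by apply/existsP; exists p; rewrite Ha pq Hb.
- move=> i j; rewrite mxE; case: ifP => [/andP [sub /eqP card] _|_]; last by rewrite eqxx.
  by apply: Hprop; rewrite properEcard sub card ltnSn.
Qed.
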